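(* For $A\in\mathrm{SL}(2,\mathbb R)$ the following are equivalent: (1) $A\Lambda_q$ contains a vertical vector (a nonzero vector of the form $(0,y)^T$); (2) there exists $s_0>0$ with $h_{s_0}A\Lambda_q=A\Lambda_q$; (3) there exists $\tau_0>0$ with $A\Lambda_q\cap S_{\tau_0}=\emptyset$. Moreover, if $A\Lambda_q$ contains a vertical vector of length $a>0$, then the smallest $s_0>0$ with $h_{s_0}A\Lambda_q=A\Lambda_q$ is $\lambda_qa^2$.
   Context: Fix an integer $q\ge3$, let $\lambda_q=2\cos(\pi/q)$, and let $G_q\subset \mathrm{SL}(2,\mathbb R)$ be the Hecke triangle group generated by $S=\begin{pmatrix}0&-1\\1&0\end{pmatrix}$ and $T_q=\begin{pmatrix}1&\lambda_q\\0&1\end{pmatrix}$, acting linearly on $\mathbb R^2$. Set $\Lambda_q=G_q(1,0)^T$ and $A\Lambda_q=\{A\mathbf v:\mathbf v\in\Lambda_q\}$. $h_s=\begin{pmatrix}1&0\\-s&1\end{pmatrix}$ for $s\in\mathbb R$; for $\tau>0$, $S_\tau=\{(x,y)^T:0<x\le\tau\}$. *)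

(* Defs.v *)
From Stdlib Require Import Reals.
Open Scope R_scope.

Record mat2 := Mat2 { m11 : R; m12 : R; m21 : R; m22 : R }.
Definition vec2 := (R * R)%type.

Definition mmul (A B : mat2) : mat2 :=
  Mat2 (m11 A * m11 B + m12 A * m21 B) (m11 A * m12 B + m12 A * m22 B)
       (m21 A * m11 B + m22 A * m21 B) (m21 A * m12 B + m22 A * m22 B).

Definition mapp (A : mat2) (v : vec2) : vec2 :=
  (m11 A * fst v + m12 A * snd v, m21 A * fst v + m22 A * snd v).

Definition det2 (A : mat2) : R := m11 A * m22 A - m12 A * m21 A.

Definition inSL2 (A : mat2) : Prop := det2 A = 1.

Definition lambda_q (q : nat) : R := 2 * cos (PI / INR q).

Definition Id2 : mat2 := Mat2 1 0 0 1.
Definition Smat : mat2 := Mat2 0 (-1) 1 0.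
Definition Sinv : mat2 := Mat2 0 1 (-1) 0.
Definition Tmat (q : nat) : mat2 := Mat2 1 (lambda_q q) 0 1.
Definition Tinv (q : nat) : mat2 := Mat2 1 (- lambda_q q) 0 1.

Inductive inGq (q : nat) : mat2 -> Prop :=
| Gq_id : inGq q Id2
| Gq_S : forall g, inGq q g -> inGq q (mmul Smat g)
| Gq_Sinv : forall g, inGq q g -> inGq q (mmul Sinv g)
| Gq_T : forall g, inGq q g -> inGq q (mmul (Tmat q) g)
| Gq_Tinv : forall g, inGq q g -> inGq q (mmul (Tinv q) g).

Definition Lambda_q (q : nat) (v : vec2) : Prop :=
  exists g, inGq q g /\ v = mapp g (1, 0).

Definition ALambda (q : nat) (A : mat2) (v : vec2) : Prop :=
  exists w, Lambda_q q w /\ v = mapp A w.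

Definition hmat (s : R) : mat2 := Mat2 1 0 (- s) 1.

Definition set_invariant (B : mat2) (P : vec2 -> Prop) : Prop :=
  forall v, (exists w, P w /\ v = mapp B w) <-> P v.

Definition in_strip (tau : R) (v : vec2) : Prop := 0 < fst v <= tau.

(* Main.v *)
Require Import Defs.
From Stdlib Require Import Reals Lra Lia Classical.
Open Scope R_scope.

Definition th (q : nat) : R := PI / INR q.
Definition sn (q j : nat) : R := sin (INR j * th q) / sin (th q).

Section Trig.
Variable q : nat.
Hypothesis hq : (3 <= q)%nat.

Lemma INRq_ge3 : 3 <= INR q.
Proof. replace 3 with (INR 3) by (simpl; ring). apply le_INR; exact hq. Qed.

Lemma th_pos : 0 < th q.
Proof. unfold th. pose proof INRq_ge3. pose proof PI_RGT_0.
  apply Rdiv_lt_0_compat; lra. Qed.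

Lemma th_mul : INR q * th q = PI.
Proof. unfold th. pose proof INRq_ge3. field. lra. Qed.

Lemma th_le : th q <= PI / 3.
Proof. unfold th. pose proof INRq_ge3. pose proof PI_RGT_0.
  unfold Rdiv. apply Rmult_le_compat_l; [lra|]. apply Rinv_le_contravar; lra. Qed.

Lemma sinth_pos : 0 < sin (th q).
Proof. pose proof th_pos. pose proof th_le. pose proof PI_RGT_0.
  apply sin_gt_0; lra. Qed.

Lemma lam_eq : lambda_q q = 2 * cos (th q).
Proof. reflexivity. Qed.

Lemma lam_pos : 0 < lambda_q q.
Proof. rewrite lam_eq. pose proof th_pos. pose proof th_le. pose proof PI_RGT_0.
  assert (0 < cos (th q)) by (apply cos_gt_0; lra). lra. Qed.

Lemma lam_lt2 : lambda_q q < 2.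
Proof. rewrite lam_eq. pose proof th_pos. pose proof th_le. pose proof PI_RGT_0.
  assert (cos (th q) < cos 0) by (apply cos_decreasing_1; lra).
  rewrite cos_0 in H2. lra. Qed.

Lemma sn0 : sn q 0 = 0.
Proof. unfold sn. simpl. rewrite Rmult_0_l, sin_0. unfold Rdiv. ring. Qed.

Lemma sn1 : sn q 1 = 1.
Proof. unfold sn. simpl. rewrite Rmult_1_l. pose proof sinth_pos. field. lra. Qed.

Lemma sn_rec : forall j, sn q (j+2) = lambda_q q * sn q (j+1) - sn q j.
Proof. intro j. unfold sn. rewrite lam_eq. pose proof sinth_pos.
  replace (INR (j+2) * th q) with ((INR j + 1) * th q + th q) by (rewrite plus_INR; simpl; ring).
  replace (INR (j+1) * th q) with ((INR j + 1) * th q) by (rewrite plus_INR; simpl; ring).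
  replace (INR j * th q) with ((INR j + 1) * th q - th q) by ring.
  rewrite sin_plus, sin_minus. field. lra. Qed.

Lemma sn2 : sn q 2 = lambda_q q.
Proof. pose proof (sn_rec 0). simpl in H. rewrite sn0, sn1 in H. lra. Qed.

Lemma snq : sn q q = 0.
Proof. unfold sn. rewrite th_mul, sin_PI. unfold Rdiv; ring. Qed.

Lemma snq1 : sn q (q-1) = 1.
Proof. unfold sn. rewrite minus_INR by lia. simpl INR.
  replace ((INR q - 1) * th q) with (PI - th q) by (rewrite <- th_mul; ring).
  rewrite sin_PI_x. pose proof sinth_pos. field. lra. Qed.

Lemma snq2 : sn q (q-2) = lambda_q q.
Proof. pose proof (sn_rec (q-2)). replace (q-2+2)%nat with q in H by lia.
  replace (q-2+1)%nat with (q-1)%nat in H by lia. rewrite snq, snq1 in H. lra. Qed.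

Lemma snq1' : sn q (q+1) = -1.
Proof. pose proof (sn_rec (q-1)). replace (q-1+2)%nat with (q+1)%nat in H by lia.
  replace (q-1+1)%nat with q in H by lia. rewrite snq, snq1 in H. lra. Qed.

Lemma sn_nonneg : forall j, (j <= q)%nat -> 0 <= sn q j.
Proof. intros j hj. unfold sn. pose proof sinth_pos. pose proof th_pos.
  assert (INR j <= INR q) by (apply le_INR; lia).
  assert (0 <= INR j) by apply pos_INR.
  unfold Rdiv. apply Rmult_le_pos; [|left; apply Rinv_0_lt_compat; lra].
  apply sin_ge_0. nra. rewrite <- th_mul. nra. Qed.

Lemma sn_ge1 : forall j, (1 <= j <= q-1)%nat -> 1 <= sn q j.
Proof. intros j hj. unfold sn. pose proof sinth_pos. pose proof th_pos. pose proof th_le.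
  pose proof PI_RGT_0.
  assert (1 <= INR j) by (replace 1 with (INR 1) by reflexivity; apply le_INR; lia).
  assert (INR j <= INR q - 1) by (replace (INR q - 1) with (INR (q-1)) by (rewrite minus_INR by lia; simpl; ring); apply le_INR; lia).
  assert (hs : sin (th q) <= sin (INR j * th q)).
  { destruct (Rle_dec (INR j * th q) (PI/2)).
    - apply sin_incr_1; nra.
    - assert (INR j * th q <= (INR q - 1) * th q) by nra.
      pose proof th_mul.
      rewrite <- (sin_PI_x (INR j * th q)). apply sin_incr_1; try lra.
      }
  replace 1 with (sin (th q) / sin (th q)) by (field; lra).
  unfold Rdiv. apply Rmult_le_compat_r; [left; apply Rinv_0_lt_compat; lra| exact hs]. Qed.

End Trig.

Lemma sn_recS : forall q j, (3 <= q)%nat -> sn q (S (S j)) = lambda_q q * sn q (S j) - sn q j.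
Proof. intros q0 j h. pose proof (sn_rec q0 h j). replace (j+2)%nat with (S (S j)) in H by lia.
  replace (j+1)%nat with (S j) in H by lia. exact H. Qed.

Inductive NP (q : nat) : bool -> vec2 -> Prop :=
| NP_e1 : NP q false (1, 0)
| NP_S : forall a c, NP q true (a, c) -> NP q false (c, - a)
| NP_U : forall a c j, NP q false (a, c) -> (j <= q - 2)%nat ->
    NP q true (a * sn q (S (S j)) - c * sn q (S j), a * sn q (S j) - c * sn q j).

Definition Mset (q : nat) (v : vec2) : Prop :=
  exists b, NP q b v \/ NP q b (- fst v, - snd v).

Lemma NP_eq q b v w : NP q b v -> v = w -> NP q b w.
Proof. intros H <-; exact H. Qed.

Definition Inv (b : bool) (v : vec2) : Prop :=
  let a := fst v in let c := snd v in
  if b then 0 <= a /\ 0 <= c /\ ((a = 0 /\ c = 1) \/ (1 <= a /\ 1 <= c))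
  else 0 <= a /\ c <= 0 /\ ((c = 0 /\ a = 1) \/ (1 <= a /\ c <= -1)).

Section NPS.
Variable q : nat.
Hypothesis hq : (3 <= q)%nat.

Lemma NP_Inv : forall b v, NP q b v -> Inv b v.
Proof.
  intros b v H. induction H; unfold Inv in *; simpl in *.
  - lra.
  - lra.
  - assert (h1 : 1 <= sn q (S j)) by (apply sn_ge1; lia).
    assert (h0 : 0 <= sn q j) by (apply sn_nonneg; lia).
    assert (h2 : 0 <= sn q (S (S j))) by (apply sn_nonneg; lia).
    destruct (Nat.eq_dec (S (S j)) q) as [e|e].
    + assert (E1 : sn q (S (S j)) = 0) by (rewrite e; apply snq; auto).
      assert (E2 : sn q (S j) = 1) by (replace (S j) with (q-1)%nat by lia; apply snq1; auto).
      rewrite E1, E2. destruct IHNP as [ha [hc [[hc0 ha1]|[ha1 hc1]]]].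
      * subst. lra.
      * split; [nra|split; [nra|right; split; nra]].
    + assert (h2' : 1 <= sn q (S (S j))) by (apply sn_ge1; lia).
      destruct IHNP as [ha [hc [[hc0 ha1]|[ha1 hc1]]]].
      * subst. split; [nra|split; [nra|right; split; nra]].
      * split; [nra|split; [nra|right; split; nra]].
Qed.

Lemma M_K1 : forall a c, Mset q (a, c) ->
  (c = 0 -> a = 1 \/ a = -1) /\ (c = 0 \/ 1 <= Rabs c) /\ (a = 0 \/ 1 <= Rabs a).
Proof.
  intros a c [b [H|H]]; apply NP_Inv in H; unfold Inv in H; simpl in H;
  destruct b; split_Rabs; lra.
Qed.

Lemma M_neg : forall a c, Mset q (a, c) -> Mset q (- a, - c).
Proof.
  intros a c [b [H|H]]; exists b; simpl in *.
  - right. eapply NP_eq; [exact H|]. simpl; f_equal; ring.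
  - left. exact H.
Qed.

Lemma NP_e2 : NP q true (0, 1).
Proof.
  eapply NP_eq. apply (NP_U q 1 0 (q-2)); [constructor|lia].
  replace (S (S (q-2))) with q by lia. replace (S (q-2)) with (q-1)%nat by lia.
  rewrite snq, snq1, snq2 by auto. simpl; f_equal; ring.
Qed.

Definition Sv (v : vec2) : vec2 := (- snd v, fst v).
Definition Siv (v : vec2) : vec2 := (snd v, - fst v).
Definition Uv (v : vec2) : vec2 := (lambda_q q * fst v - snd v, fst v).
Definition Uiv (v : vec2) : vec2 := (snd v, lambda_q q * snd v - fst v).

Lemma NP_Siv : forall b v, NP q b v -> Mset q (Siv v).
Proof.
  intros b v H. destruct H; unfold Siv; simpl.
  - exists true. right. eapply NP_eq; [apply NP_e2|]. simpl; f_equal; ring.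
  - exists true. right. eapply NP_eq; [exact H|]. simpl; f_equal; ring.
  - exists false. left. eapply NP_eq; [apply NP_S; apply NP_U; eauto|]. reflexivity.
Qed.

Lemma NP_Uv : forall b v, NP q b v -> Mset q (Uv v).
Proof.
  intros b v H. destruct H; unfold Uv; simpl.
  - exists true; left. eapply NP_eq; [apply (NP_U q 1 0 0); [constructor|lia]|].
    rewrite sn0, sn1, sn2 by auto. simpl; f_equal; ring.
  - exists true; left. eapply NP_eq; [apply (NP_U q c (-a) 0); [constructor; auto|lia]|].
    rewrite sn0, sn1, sn2 by auto. simpl; f_equal; ring.
  - destruct (Nat.eq_dec j (q-2)) as [e|e].
    + subst j. replace (S (S (q-2))) with q by lia. replace (S (q-2)) with (q-1)%nat by lia.
      rewrite snq, snq1, snq2 by auto. exists false; right. eapply NP_eq; [exact H|].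
      simpl; f_equal; ring.
    + exists true; left. eapply NP_eq; [apply (NP_U q a c (S j)); [auto|lia]|].
      rewrite (sn_recS q (S j)), (sn_recS q j) by auto. simpl; f_equal; ring.
Qed.

Lemma NP_Uiv : forall b v, NP q b v -> Mset q (Uiv v).
Proof.
  intros b v H. destruct H; unfold Uiv; simpl.
  - exists true; right. eapply NP_eq; [apply NP_e2|]. simpl; f_equal; ring.
  - exists true; right. eapply NP_eq; [apply (NP_U q c (-a) (q-2)); [constructor; auto|lia]|].
    replace (S (S (q-2))) with q by lia. replace (S (q-2)) with (q-1)%nat by lia.
    rewrite snq, snq1, snq2 by auto. simpl; f_equal; ring.
  - destruct j as [|j].
    + exists false; left. eapply NP_eq; [exact H|].
      rewrite sn0, sn1, sn2 by auto. simpl; f_equal; ring.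
    + exists true; left. eapply NP_eq; [apply (NP_U q a c j); [auto|lia]|].
      rewrite (sn_recS q (S j)) by auto. simpl; f_equal; try ring.
      rewrite (sn_recS q j) by auto. ring.
Qed.

Lemma Mset_eq v w : Mset q v -> v = w -> Mset q w.
Proof. intros H <-; exact H. Qed.

Lemma M_lin (F : vec2 -> vec2)
  (Hneg : forall a c, F (- a, - c) = (- fst (F (a, c)), - snd (F (a, c))))
  (HF : forall b v, NP q b v -> Mset q (F v)) :
  forall v, Mset q v -> Mset q (F v).
Proof.
  intros [a c] [b [H|H]].
  - eapply HF; eauto.
  - simpl in H. apply HF in H. rewrite Hneg in H.
    apply M_neg in H. eapply Mset_eq; [exact H|].
    destruct (F (a, c)); simpl; f_equal; ring.
Qed.

Lemma NP_Sv : forall b v, NP q b v -> Mset q (Sv v).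
Proof.
  intros b v H. apply NP_Siv in H. destruct v as [a c]. unfold Siv, Sv in *; simpl in *.
  apply M_neg in H. eapply Mset_eq; [exact H|]. f_equal; ring.
Qed.

Lemma M_Sv : forall v, Mset q v -> Mset q (Sv v).
Proof. apply M_lin; [intros; unfold Sv; simpl; reflexivity| apply NP_Sv]. Qed.
Lemma M_Siv : forall v, Mset q v -> Mset q (Siv v).
Proof. apply M_lin; [intros; unfold Siv; simpl; reflexivity| apply NP_Siv]. Qed.
Lemma M_Uv : forall v, Mset q v -> Mset q (Uv v).
Proof. apply M_lin; [intros; unfold Uv; simpl; f_equal; ring| apply NP_Uv]. Qed.
Lemma M_Uiv : forall v, Mset q v -> Mset q (Uiv v).
Proof. apply M_lin; [intros; unfold Uiv; simpl; f_equal; ring| apply NP_Uiv]. Qed.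

Lemma M_gen : forall X, (X = Smat \/ X = Sinv \/ X = Tmat q \/ X = Tinv q) ->
  forall v, Mset q v -> Mset q (mapp X v).
Proof.
  intros X HX [a c] H.
  destruct HX as [HX|[HX|[HX|HX]]]; subst X.
  - eapply Mset_eq; [apply M_Sv; exact H|]. unfold Sv, mapp; simpl; f_equal; ring.
  - eapply Mset_eq; [apply M_Siv; exact H|]. unfold Siv, mapp; simpl; f_equal; ring.
  - apply M_Sv, M_Uv, M_neg in H. eapply Mset_eq; [exact H|].
    unfold Sv, Uv, mapp; simpl; f_equal; ring.
  - apply M_Uiv, M_Sv in H. eapply Mset_eq; [exact H|].
    unfold Sv, Uiv, mapp; simpl; f_equal; ring.
Qed.
End NPS.

Definition Det (w v : vec2) : R := fst w * snd v - snd w * fst v.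
Definition vlin (v : vec2) (t : R) (w : vec2) : vec2 :=
  (fst v + t * fst w, snd v + t * snd w).
Definition isgen (q : nat) (X : mat2) : Prop :=
  X = Smat \/ X = Sinv \/ X = Tmat q \/ X = Tinv q.

Lemma mapp_mmul X g v : mapp (mmul X g) v = mapp X (mapp g v).
Proof. destruct v; unfold mapp, mmul; simpl; f_equal; ring. Qed.

Lemma mapp_Id v : mapp Id2 v = v.
Proof. destruct v; unfold mapp, Id2; simpl; f_equal; ring. Qed.

Lemma Det_mapp X w v : Det (mapp X w) (mapp X v) = det2 X * Det w v.
Proof. destruct w, v; unfold Det, mapp, det2; simpl; ring. Qed.

Lemma mapp_vlin X v t w : mapp X (vlin v t w) = vlin (mapp X v) t (mapp X w).
Proof. destruct w, v; unfold vlin, mapp; simpl; f_equal; ring. Qed.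

Section Lam.
Variable q : nat.
Hypothesis hq : (3 <= q)%nat.

Lemma Lam_e1 : Lambda_q q (1, 0).
Proof. exists Id2. split; [constructor| rewrite mapp_Id; reflexivity]. Qed.

Lemma Lam_gen X : isgen q X -> forall v, Lambda_q q v -> Lambda_q q (mapp X v).
Proof.
  intros HX v [g [Hg ->]]. exists (mmul X g). split; [|symmetry; apply mapp_mmul].
  destruct HX as [H|[H|[H|H]]]; subst X; constructor; auto.
Qed.

Lemma Lam_ind (P : vec2 -> Prop) : P (1, 0) ->
  (forall X, isgen q X -> forall w, Lambda_q q w -> P w -> P (mapp X w)) ->
  forall w, Lambda_q q w -> P w.
Proof.
  intros H0 HX w [g [Hg ->]]. induction Hg.
  - rewrite mapp_Id; exact H0.
  - rewrite mapp_mmul. apply HX; [left; auto| exists g; auto| auto].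
  - rewrite mapp_mmul. apply HX; [right; left; auto| exists g; auto| auto].
  - rewrite mapp_mmul. apply HX; [right; right; left; auto| exists g; auto| auto].
  - rewrite mapp_mmul. apply HX; [right; right; right; auto| exists g; auto| auto].
Qed.

Lemma gen_inv X : isgen q X -> det2 X = 1 /\
  exists Y, isgen q Y /\ forall v, mapp X (mapp Y v) = v.
Proof.
  intros HX. destruct HX as [H|[H|[H|H]]]; subst X; (split; [unfold det2; simpl; ring|]).
  - exists Sinv. split; [right; left; auto|]. intros [a c]; unfold mapp; simpl; f_equal; ring.
  - exists Smat. split; [left; auto|]. intros [a c]; unfold mapp; simpl; f_equal; ring.
  - exists (Tinv q). split; [right; right; right; auto|]. intros [a c]; unfold mapp; simpl; f_equal; ring.
  - exists (Tmat q). split; [right; right; left; auto|]. intros [a c]; unfold mapp; simpl; f_equal; ring.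
Qed.

Lemma Lam_M : forall w, Lambda_q q w -> Mset q w.
Proof.
  intros w0 Hw0; pattern w0; apply Lam_ind; [ | | exact Hw0]; clear w0 Hw0.
  - exists false; left; constructor.
  - intros X HX w _ H. apply (M_gen q hq); auto.
Qed.

Lemma Lam_K1 : forall a c, Lambda_q q (a, c) ->
  (c = 0 -> a = 1 \/ a = -1) /\ (c = 0 \/ 1 <= Rabs c) /\ (a = 0 \/ 1 <= Rabs a).
Proof. intros a c H. apply (M_K1 q hq). apply Lam_M; auto. Qed.

Lemma Lam_neg : forall a c, Lambda_q q (a, c) -> Lambda_q q (- a, - c).
Proof.
  intros a c H. apply (Lam_gen Smat) in H; [|left; auto].
  apply (Lam_gen Smat) in H; [|left; auto].
  unfold mapp in H; simpl in H. replace (- a) with (0 * (0 * a + -1 * c) + -1 * (1 * a + 0 * c)) by ring.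
  replace (- c) with (1 * (0 * a + -1 * c) + 0 * (1 * a + 0 * c)) by ring. exact H.
Qed.

Lemma Lam_D : forall w, Lambda_q q w -> forall v, Lambda_q q v ->
  (Det w v = 0 -> v = w \/ v = (- fst w, - snd w)) /\ (Det w v = 0 \/ 1 <= Rabs (Det w v)).
Proof.
  intros w0 Hw0; pattern w0; apply Lam_ind; [ | | exact Hw0]; clear w0 Hw0.
  - intros [a c] Hv. unfold Det; simpl.
    destruct (Lam_K1 a c Hv) as [h1 [h2 _]].
    split.
    + intro E. replace c with 0 in * by lra. destruct (h1 eq_refl) as [->| ->].
      * left; reflexivity. * right; f_equal; ring.
    + replace (1 * c - 0 * a) with c by ring. exact h2.
  - intros X HX w Hw IH v Hv.
    destruct (gen_inv X HX) as [hd [Y [HY HXY]]].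
    assert (Hv' : Lambda_q q (mapp Y v)) by (apply Lam_gen; auto).
    rewrite <- (HXY v), Det_mapp, hd, Rmult_1_l.
    destruct (IH _ Hv') as [i1 i2]. split; [|exact i2].
    intro E. destruct (i1 E) as [E'|E']; rewrite E'; [left; reflexivity|right].
    destruct w; unfold mapp; simpl; f_equal; ring.
Qed.

Lemma Lam_Tr : forall w, Lambda_q q w -> forall v, Lambda_q q v ->
  Lambda_q q (vlin v (lambda_q q * Det w v) w) /\
  Lambda_q q (vlin v (- (lambda_q q * Det w v)) w).
Proof.
  intros w0 Hw0; pattern w0; apply Lam_ind; [ | | exact Hw0]; clear w0 Hw0.
  - intros [a c] Hv. unfold Det, vlin; simpl. split.
    + apply (Lam_gen (Tmat q)) in Hv; [|right; right; left; auto].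
      unfold mapp in Hv; simpl in Hv. eapply eq_ind; [exact Hv|]. f_equal; ring.
    + apply (Lam_gen (Tinv q)) in Hv; [|right; right; right; auto].
      unfold mapp in Hv; simpl in Hv. eapply eq_ind; [exact Hv|]. f_equal; ring.
  - intros X HX w Hw IH v Hv.
    destruct (gen_inv X HX) as [hd [Y [HY HXY]]].
    assert (Hv' : Lambda_q q (mapp Y v)) by (apply Lam_gen; auto).
    rewrite <- (HXY v), Det_mapp, hd, Rmult_1_l, <- !mapp_vlin.
    destruct (IH _ Hv') as [i1 i2]. split; apply Lam_gen; auto.
Qed.

Lemma Lam_partner : forall w, Lambda_q q w -> exists v, Lambda_q q v /\ Det w v = 1.
Proof.
  intros w0 Hw0; pattern w0; apply Lam_ind; [ | | exact Hw0]; clear w0 Hw0.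
  - exists (0, 1). split; [|unfold Det; simpl; ring].
    pose proof Lam_e1 as He. apply (Lam_gen Smat) in He ; [|left; auto]. unfold mapp in He; simpl in He.
    eapply eq_ind; [exact He|]. f_equal; ring.
  - intros X HX w Hw [v [Hv Hd]]. exists (mapp X v). split; [apply Lam_gen; auto|].
    destruct (gen_inv X HX) as [hd _]. rewrite Det_mapp, hd, Hd; ring.
Qed.

End Lam.

Lemma Det_vlin_self w u x : Det w (vlin u x w) = Det w u.
Proof. unfold Det, vlin; simpl; ring. Qed.
Lemma Det_vlin_v v x w : Det v (vlin v x w) = - x * Det w v.
Proof. unfold Det, vlin; simpl; ring. Qed.
Lemma vlin_vlin v t x w : vlin (vlin v t w) x w = vlin v (t + x) w.
Proof. unfold vlin; simpl; f_equal; ring. Qed.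
Lemma vlin_0 v w : vlin v 0 w = v.
Proof. destruct v; unfold vlin; simpl; f_equal; ring. Qed.

Lemma floor_nat : forall c z, 0 < c -> 0 <= z -> exists n : nat, INR n * c <= z < INR n * c + c.
Proof.
  intros c z hc hz. destruct (INR_archimed c z hc) as [N HN].
  revert HN. induction N as [|N IH]; intro HN.
  - simpl in HN. lra.
  - destruct (Rlt_dec z (INR N * c)) as [h|h].
    + apply IH; lra.
    + exists N. rewrite S_INR in HN. lra.
Qed.

Lemma round_nat : forall c z, 0 < c -> exists n : nat,
  Rabs (z - INR n * c) <= c / 2 \/ Rabs (z + INR n * c) <= c / 2.
Proof.
  intros c z hc. destruct (floor_nat c (Rabs z) hc (Rabs_pos z)) as [n Hn].
  assert (E : exists m : nat, Rabs (Rabs z - INR m * c) <= c / 2).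
  { destruct (Rle_dec (Rabs z - INR n * c) (c/2)).
    - exists n. rewrite Rabs_right by lra. lra.
    - exists (S n). rewrite S_INR. rewrite Rabs_left1 by lra. lra. }
  destruct E as [m Hm]. exists m.
  destruct (Rle_dec 0 z).
  - left. rewrite (Rabs_right z) in Hm by lra. exact Hm.
  - right. rewrite (Rabs_left z) in Hm by lra.
    replace (z + INR m * c) with (- (- z - INR m * c)) by ring. rewrite Rabs_Ropp. exact Hm.
Qed.

Section Main.
Variable q : nat.
Hypothesis hq : (3 <= q)%nat.
Variable A : mat2.
Hypothesis hA : inSL2 A.

Definition F (v : vec2) : R := fst (mapp A v).

Lemma F_vlin v t w : F (vlin v t w) = F v + t * F w.
Proof. unfold F, mapp, vlin; simpl; ring. Qed.

Lemma A_inv : forall v, fst v = m22 A * fst (mapp A v) - m12 A * snd (mapp A v) /\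
  snd v = - m21 A * fst (mapp A v) + m11 A * snd (mapp A v).
Proof.
  intros [a c]. unfold inSL2, det2 in hA. unfold mapp; simpl. split.
  - transitivity ((m11 A * m22 A - m12 A * m21 A) * a); [rewrite hA; ring| ring].
  - transitivity ((m11 A * m22 A - m12 A * m21 A) * c); [rewrite hA; ring| ring].
Qed.

Lemma A_inj : forall v w, mapp A v = mapp A w -> v = w.
Proof.
  intros v w E. destruct (A_inv v) as [h1 h2]. destruct (A_inv w) as [h3 h4].
  rewrite E in h1, h2. destruct v, w; simpl in *. f_equal; lra.
Qed.

Lemma f_det : forall w0 y, mapp A w0 = (0, y) -> forall v, y * F v = - Det w0 v.
Proof.
  intros [w1 w2] y E [v1 v2]. unfold inSL2, det2 in hA. unfold mapp in E; simpl in E.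
  injection E as E1 E2. unfold F, Det, mapp; simpl. rewrite <- E2.
  transitivity ((m11 A * w1 + m12 A * w2) * (m21 A * v1 + m22 A * v2)
     - (m11 A * m22 A - m12 A * m21 A) * (w1 * v2 - w2 * v1)); [ring|].
  rewrite E1, hA. ring.
Qed.

Lemma h_conj : forall w0 y, y <> 0 -> mapp A w0 = (0, y) -> forall s v,
  mapp (hmat s) (mapp A v) = mapp A (vlin v (s / y ^ 2 * Det w0 v) w0).
Proof.
  intros w0 y hy E s v. pose proof (f_det w0 y E v) as Hf.
  assert (Ef : F v = - Det w0 v / y) by (apply (Rmult_eq_reg_l y); [|auto]; rewrite Hf; field; auto).
  destruct w0 as [w1 w2]. unfold mapp in E; simpl in E. injection E as E1 E2.
  unfold F in Ef. unfold mapp, vlin, hmat; simpl. unfold mapp in Ef; simpl in Ef.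
  set (D := Det (w1, w2) v) in *. set (t := s / (y * (y * 1)) * D).
  destruct v as [v1 v2]; simpl in *.
  f_equal.
  - replace (m11 A * (v1 + t * w1) + m12 A * (v2 + t * w2)) with
      (m11 A * v1 + m12 A * v2 + t * (m11 A * w1 + m12 A * w2)) by ring.
    rewrite E1. ring.
  - replace (m21 A * (v1 + t * w1) + m22 A * (v2 + t * w2)) with
      (m21 A * v1 + m22 A * v2 + t * (m21 A * w1 + m22 A * w2)) by ring.
    rewrite E2. replace (m11 A * v1 + m12 A * v2) with (- D / y) by (rewrite Ef; reflexivity).
    unfold t. field. auto.
Qed.


Definition LL := ALambda q A.

Lemma L_intro u : Lambda_q q u -> LL (mapp A u).
Proof. intro H. exists u. split; auto. Qed.

Section P1.
Variables (y : R) (w0 : vec2).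
Hypotheses (hy : y <> 0) (Hw0 : Lambda_q q w0) (E0 : mapp A w0 = (0, y)).

Lemma P1_inv : set_invariant (hmat (lambda_q q * y ^ 2)) LL.
Proof.
  intro v. split.
  - intros [w [[u [Hu ->]] ->]]. rewrite (h_conj w0 y hy E0).
    replace (lambda_q q * y ^ 2 / y ^ 2) with (lambda_q q) by (field; auto).
    apply L_intro. apply (Lam_Tr q w0 Hw0 u Hu).
  - intros [u [Hu ->]]. exists (mapp A (vlin u (- (lambda_q q * Det w0 u)) w0)). split.
    + apply L_intro. apply (Lam_Tr q w0 Hw0 u Hu).
    + rewrite (h_conj w0 y hy E0), Det_vlin_self, vlin_vlin.
      replace (- (lambda_q q * Det w0 u) + lambda_q q * y ^ 2 / y ^ 2 * Det w0 u) with 0 by (field; auto).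
      rewrite vlin_0. reflexivity.
Qed.

Lemma P1_min : forall s, 0 < s -> set_invariant (hmat s) LL -> lambda_q q * y ^ 2 <= s.
Proof.
  intros s hs Hinv. destruct (Lam_partner q w0 Hw0) as [v [Hv Hd]].
  assert (H : LL (mapp (hmat s) (mapp A v))).
  { apply Hinv. exists (mapp A v). split; [apply L_intro; auto| reflexivity]. }
  destruct H as [u [Hu Eu]]. rewrite (h_conj w0 y hy E0) in Eu. apply A_inj in Eu.
  rewrite Hd in Eu. set (t := s / y ^ 2 * 1) in Eu.
  assert (hy2 : 0 < y ^ 2) by (pose proof (Rsqr_pos_lt y hy) as hh; unfold Rsqr in hh; replace (y ^ 2) with (y * y) by ring; exact hh).
  assert (ht : 0 < t) by (unfold t; apply Rmult_lt_0_compat; [apply Rdiv_lt_0_compat|]; lra).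
  assert (Hs : s = t * y ^ 2) by (unfold t; field; auto).
  pose proof (proj2 (Lam_Tr q w0 Hw0 u Hu)) as Hu2.
  rewrite <- Eu, Det_vlin_self, Hd, vlin_vlin in Hu2.
  pose proof (proj2 (Lam_D q hq v Hv u Hu)) as D1.
  rewrite <- Eu, Det_vlin_v, Hd in D1.
  pose proof (proj2 (Lam_D q hq v Hv _ Hu2)) as D2.
  rewrite Det_vlin_v, Hd in D2.
  pose proof (lam_lt2 q hq) as hl2.
  assert (t1 : 1 <= t) by (destruct D1 as [D1|D1]; [lra| rewrite Rabs_left in D1; lra]).
  assert (t2 : lambda_q q <= t).
  { destruct (Rle_dec (lambda_q q) t) as [h|h]; auto.
    destruct D2 as [D2|D2]; [lra|]. rewrite Rabs_right in D2; lra. }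
  rewrite Hs. nra.
Qed.

Lemma P1_strip : exists tau0, 0 < tau0 /\ forall v, LL v -> ~ in_strip tau0 v.
Proof.
  assert (hay : 0 < Rabs y) by (apply Rabs_pos_lt; auto).
  exists (/ (2 * Rabs y)). split; [apply Rinv_0_lt_compat; lra|].
  intros v [u [Hu ->]] [h1 h2].
  pose proof (f_det w0 y E0 u) as Hf. unfold F in Hf.
  destruct (proj2 (Lam_D q hq w0 Hw0 u Hu)) as [D|D].
  - rewrite D in Hf. assert (fst (mapp A u) = 0).
    { apply (Rmult_eq_reg_l y); auto. lra. } lra.
  - replace (Det w0 u) with (- (y * fst (mapp A u))) in D by lra.
    rewrite Rabs_Ropp, Rabs_mult, (Rabs_right (fst (mapp A u))) in D by lra.
    assert (Rabs y * fst (mapp A u) <= Rabs y * / (2 * Rabs y)) by (apply Rmult_le_compat_l; lra).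
    replace (Rabs y * / (2 * Rabs y)) with (/2) in H by (field; lra). lra.
Qed.

End P1.

Lemma abs_bound : forall B a b x z, 0 <= x -> Rabs a <= B -> Rabs b <= B ->
  Rabs (a * x + b * z) <= B * (x + Rabs z).
Proof.
  intros B a b x z hx ha hb. eapply Rle_trans; [apply Rabs_triang|].
  rewrite !Rabs_mult, (Rabs_right x) by lra.
  pose proof (Rabs_pos z). pose proof (Rabs_pos a). pose proof (Rabs_pos b). nra.
Qed.

Section P2.
Variable s : R.
Hypotheses (hs : 0 < s) (Hinv : set_invariant (hmat s) LL).

Lemma step_f : forall x z, LL (x, z) -> LL (x, z - s * x).
Proof.
  intros x z H. replace (x, z - s * x) with (mapp (hmat s) (x, z)) by (unfold mapp, hmat; simpl; f_equal; ring).
  apply Hinv. exists (x, z). auto.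
Qed.

Lemma step_b : forall x z, LL (x, z) -> LL (x, z + s * x).
Proof.
  intros x z H. apply Hinv in H. destruct H as [[w1 w2] [Hw E]].
  unfold mapp, hmat in E; simpl in E. injection E as E1 E2.
  replace (x, z + s * x) with (w1, w2) by (f_equal; subst; ring). exact Hw.
Qed.

Lemma iter_fb : forall n x z, LL (x, z) -> LL (x, z - INR n * (s * x)) /\ LL (x, z + INR n * (s * x)).
Proof.
  induction n as [|n IH]; intros x z H.
  - simpl. replace (z - 0 * (s * x)) with z by ring. replace (z + 0 * (s * x)) with z by ring. auto.
  - destruct (IH x z H) as [H1 H2]. rewrite S_INR. split.
    + replace (z - (INR n + 1) * (s * x)) with (z - INR n * (s * x) - s * x) by ring. apply step_f; auto.
    + replace (z + (INR n + 1) * (s * x)) with (z + INR n * (s * x) + s * x) by ring. apply step_b; auto.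
Qed.

Lemma P2_strip : exists tau0, 0 < tau0 /\ forall v, LL v -> ~ in_strip tau0 v.
Proof.
  set (B := 1 + Rabs (m11 A) + Rabs (m12 A) + Rabs (m21 A) + Rabs (m22 A)).
  assert (hB : 1 <= B) by (unfold B; pose proof (Rabs_pos (m11 A)); pose proof (Rabs_pos (m12 A));
    pose proof (Rabs_pos (m21 A)); pose proof (Rabs_pos (m22 A)); lra).
  assert (b11 : Rabs (m11 A) <= B) by (unfold B; pose proof (Rabs_pos (m11 A)); pose proof (Rabs_pos (m12 A));
    pose proof (Rabs_pos (m21 A)); pose proof (Rabs_pos (m22 A)); lra).
  assert (b12 : Rabs (- m12 A) <= B) by (rewrite Rabs_Ropp; unfold B; pose proof (Rabs_pos (m11 A)); pose proof (Rabs_pos (m12 A));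
    pose proof (Rabs_pos (m21 A)); pose proof (Rabs_pos (m22 A)); lra).
  assert (b21 : Rabs (- m21 A) <= B) by (rewrite Rabs_Ropp; unfold B; pose proof (Rabs_pos (m11 A)); pose proof (Rabs_pos (m12 A));
    pose proof (Rabs_pos (m21 A)); pose proof (Rabs_pos (m22 A)); lra).
  assert (b22 : Rabs (m22 A) <= B) by (unfold B; pose proof (Rabs_pos (m11 A)); pose proof (Rabs_pos (m12 A));
    pose proof (Rabs_pos (m21 A)); pose proof (Rabs_pos (m22 A)); lra).
  clearbody B.
  exists (/ (4 * B * (1 + s))). split; [apply Rinv_0_lt_compat; nra|].
  intros [x z] H [h1 h2]. simpl in h1, h2.
  assert (Htau : 4 * B * (1 + s) * / (4 * B * (1 + s)) = 1) by (field; nra).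
  assert (Hz : exists z', LL (x, z') /\ Rabs z' <= s * x / 2).
  { destruct (round_nat (s * x) z) as [n [Hn|Hn]]; [nra| |].
    - exists (z - INR n * (s * x)). split; [apply iter_fb; auto| exact Hn].
    - exists (z + INR n * (s * x)). split; [apply iter_fb; auto| exact Hn]. }
  destruct Hz as [z' [[u [Hu Eu]] Hz']].
  destruct (A_inv u) as [hu1 hu2]. rewrite <- Eu in hu1, hu2. simpl in hu1, hu2.
  destruct u as [u1 u2]. simpl in hu1, hu2.
  destruct (Lam_K1 q hq u1 u2 Hu) as [k1 [k2 _]].
  assert (e1 : Rabs u1 <= B * (x + Rabs z')) by (rewrite hu1; replace (m22 A * x - m12 A * z') with (m22 A * x + - m12 A * z') by ring; apply abs_bound; lra).
  assert (e2 : Rabs u2 <= B * (x + Rabs z')) by (rewrite hu2; replace (- m21 A * x + m11 A * z') with (- m21 A * x + m11 A * z') by ring; apply abs_bound; lra).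
  assert (e3 : B * (x + Rabs z') <= B * x * (1 + s)).
  { assert (x + Rabs z' <= x * (1 + s)) by nra. replace (B * x * (1 + s)) with (B * (x * (1 + s))) by ring. apply Rmult_le_compat_l; lra. }
  assert (e4 : B * x * (1 + s) <= B * / (4 * B * (1 + s)) * (1 + s)) by (apply Rmult_le_compat_r; [lra|]; apply Rmult_le_compat_l; lra).
  assert (e5 : B * / (4 * B * (1 + s)) * (1 + s) = / 4) by (field; nra).
  assert (e6 : forall W, W <= B * (x + Rabs z') -> W <= / 4).
  { intros W hW. eapply Rle_trans; [exact hW|]. eapply Rle_trans; [exact e3|]. rewrite <- e5; exact e4. }
  destruct k2 as [k2|k2].
  - assert (Rabs u1 = 1) by (destruct (k1 k2) as [k|k]; rewrite k; split_Rabs; lra).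
    apply e6 in e1. lra.
  - apply Rle_trans with (1 := k2), e6 in e2. lra.
Qed.

End P2.

Lemma iter_Tr : forall n u w, Lambda_q q u -> Lambda_q q w -> Det u w = 1 ->
  Lambda_q q (vlin w (INR n * lambda_q q) u) /\ Lambda_q q (vlin w (- (INR n * lambda_q q)) u).
Proof.
  induction n as [|n IH]; intros u w Hu Hw Hd.
  - simpl. rewrite Rmult_0_l, Ropp_0, vlin_0. auto.
  - destruct (IH u w Hu Hw Hd) as [H1 H2]. rewrite S_INR.
    pose proof (Lam_Tr q u Hu _ H1) as [T1 _].
    pose proof (Lam_Tr q u Hu _ H2) as [_ T2].
    rewrite Det_vlin_self, Hd, vlin_vlin in T1, T2. split.
    + eapply eq_ind; [exact T1|]. f_equal; ring.
    + eapply eq_ind; [exact T2|]. f_equal; ring.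
Qed.

Lemma P3_P1 : forall tau0, 0 < tau0 -> (forall v, LL v -> ~ in_strip tau0 v) ->
  exists y, y <> 0 /\ LL (0, y).
Proof.
  intros tau0 ht Hs. apply NNPP. intro HP.
  assert (Hnz : forall u, Lambda_q q u -> F u <> 0).
  { intros u Hu HF. apply HP. exists (snd (mapp A u)). split.
    - intro Hy. assert (mapp A u = mapp A (0, 0)).
      { unfold F in HF. destruct (mapp A u) eqn:E. simpl in *. subst. unfold mapp; simpl. f_equal; ring. }
      apply A_inj in H. subst u. destruct (Lam_K1 q hq 0 0 Hu) as [k _]. destruct (k eq_refl); lra.
    - exists u. split; auto. unfold F in HF. destruct (mapp A u); simpl in *. subst; reflexivity. }
  assert (Hbig : forall u, Lambda_q q u -> tau0 < Rabs (F u)).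
  { intros u Hu. destruct (Rlt_dec 0 (F u)) as [h|h].
    - rewrite Rabs_right by lra. destruct (Rlt_dec tau0 (F u)); auto.
      exfalso. apply (Hs (mapp A u)); [apply L_intro; auto| split; unfold F in *; lra].
    - assert (F u <> 0) by auto. rewrite Rabs_left by lra.
      destruct u as [a c]. pose proof (Lam_neg q a c Hu) as Hn.
      destruct (Rlt_dec tau0 (- F (a, c))); auto. exfalso.
      apply (Hs (mapp A (-a, -c))); [apply L_intro; auto|].
      unfold in_strip. unfold F, mapp in *; simpl in *. split; lra. }
  pose proof (lam_pos q hq) as hl0. pose proof (lam_lt2 q hq) as hl2.
  set (r := lambda_q q / 2).
  assert (Euc : forall k, exists u w, Lambda_q q u /\ Lambda_q q w /\ Det u w = 1 /\
     Rabs (F u) <= r ^ k * Rabs (F (1, 0))).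
  { induction k as [|k IH].
    - exists (1, 0), (0, 1). split; [apply Lam_e1; auto|]. split.
      + pose proof (Lam_e1 q) as He. apply (Lam_gen q Smat) in He; [|left; auto].
        unfold mapp in He; simpl in He. eapply eq_ind; [exact He|]. f_equal; ring.
      + split; [unfold Det; simpl; ring| simpl; lra].
    - destruct IH as [u [w [Hu [Hw [Hd Hb]]]]].
      assert (Hw' : exists w', Lambda_q q w' /\ Det u w' = 1 /\ Rabs (F w') <= r * Rabs (F u)).
      { assert (hF := Hnz u Hu).
        assert (hc : 0 < Rabs (lambda_q q * F u)) by (apply Rabs_pos_lt; apply Rmult_integral_contrapositive; split; lra).
        destruct (round_nat (Rabs (lambda_q q * F u)) (F w) hc) as [n Hn].
        destruct (iter_Tr n u w Hu Hw Hd) as [T1 T2].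
        assert (Er : Rabs (lambda_q q * F u) / 2 = r * Rabs (F u)) by (unfold r; rewrite Rabs_mult, (Rabs_right (lambda_q q)) by lra; field).
        destruct (Rlt_dec 0 (F u)) as [hp|hp].
        - rewrite (Rabs_right (lambda_q q * F u)) in Hn by nra. destruct Hn as [Hn|Hn].
          + exists (vlin w (- (INR n * lambda_q q)) u). split; [auto| split; [rewrite Det_vlin_self; auto|]].
            rewrite F_vlin, <- Er, (Rabs_right (lambda_q q * F u)) by nra.
            replace (F w + - (INR n * lambda_q q) * F u) with (F w - INR n * (lambda_q q * F u)) by ring. exact Hn.
          + exists (vlin w (INR n * lambda_q q) u). split; [auto| split; [rewrite Det_vlin_self; auto|]].
            rewrite F_vlin, <- Er, (Rabs_right (lambda_q q * F u)) by nra.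
            replace (F w + (INR n * lambda_q q) * F u) with (F w + INR n * (lambda_q q * F u)) by ring. exact Hn.
        - assert (hn : F u < 0) by lra.
          rewrite (Rabs_left (lambda_q q * F u)) in Hn by nra. destruct Hn as [Hn|Hn].
          + exists (vlin w (INR n * lambda_q q) u). split; [auto| split; [rewrite Det_vlin_self; auto|]].
            rewrite F_vlin, <- Er, (Rabs_left (lambda_q q * F u)) by nra.
            replace (F w + (INR n * lambda_q q) * F u) with (F w - INR n * - (lambda_q q * F u)) by ring. exact Hn.
          + exists (vlin w (- (INR n * lambda_q q)) u). split; [auto| split; [rewrite Det_vlin_self; auto|]].
            rewrite F_vlin, <- Er, (Rabs_left (lambda_q q * F u)) by nra.
            replace (F w + - (INR n * lambda_q q) * F u) with (F w + INR n * - (lambda_q q * F u)) by ring. exact Hn. }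
      destruct Hw' as [w' [Hw' [Hd' Hb']]].
      destruct u as [a c].
      exists w', (- a, - c). split; auto. split; [apply Lam_neg; auto|]. split.
      + unfold Det in *; simpl in *. lra.
      + simpl. assert (0 <= r) by (unfold r; lra). nra. }
  assert (hr : Rabs r < 1) by (unfold r; rewrite Rabs_right; lra).
  assert (he : 0 < tau0 / (Rabs (F (1, 0)) + 1)) by (apply Rdiv_lt_0_compat; [lra| pose proof (Rabs_pos (F (1,0))); lra]).
  destruct (pow_lt_1_zero r hr _ he) as [N HN].
  specialize (HN N (Nat.le_refl N)).
  destruct (Euc N) as [u [w [Hu [_ [_ Hb]]]]].
  pose proof (Hbig u Hu).
  assert (0 <= r ^ N) by (apply pow_le; unfold r; lra).
  rewrite Rabs_right in HN by lra.
  pose proof (Rabs_pos (F (1, 0))).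
  assert (r ^ N * (Rabs (F (1, 0)) + 1) < tau0).
  { apply (Rmult_lt_compat_r (Rabs (F (1, 0)) + 1)) in HN; [|lra].
    replace (tau0 / (Rabs (F (1, 0)) + 1) * (Rabs (F (1, 0)) + 1)) with tau0 in HN by (field; lra). exact HN. }
  nra.
Qed.

End Main.
Theorem mainTheorem6 (q : nat) (hq : (3 <= q)%nat) (A : mat2) (hA : inSL2 A) :
  let P1 := exists y : R, y <> 0 /\ ALambda q A (0, y) in
  let P2 := exists s0 : R, 0 < s0 /\ set_invariant (hmat s0) (ALambda q A) in
  let P3 := exists tau0 : R, 0 < tau0 /\
              (forall v, ALambda q A v -> ~ in_strip tau0 v) in
  ((P1 <-> P2) /\ (P2 <-> P3)) /\
  (forall a : R, 0 < a ->
     (exists y : R, Rabs y = a /\ ALambda q A (0, y)) ->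
     (0 < lambda_q q * a ^ 2 /\
      set_invariant (hmat (lambda_q q * a ^ 2)) (ALambda q A) /\
      forall s, 0 < s -> set_invariant (hmat s) (ALambda q A) ->
        lambda_q q * a ^ 2 <= s)).
Proof.
  intros P1 P2 P3.
  pose proof (lam_pos q hq) as hl.
  assert (Hy2 : forall y, y <> 0 -> 0 < y ^ 2).
  { intros y hy. pose proof (Rsqr_pos_lt y hy) as hh; unfold Rsqr in hh;
    replace (y ^ 2) with (y * y) by ring; exact hh. }
  assert (H12 : P1 -> P2).
  { intros [y [hy [w0 [Hw0 E]]]]. exists (lambda_q q * y ^ 2). split.
    - apply Rmult_lt_0_compat; auto.
    - apply (P1_inv q A hA y w0 hy Hw0 (eq_sym E)). }
  assert (H13 : P1 -> P3).
  { intros [y [hy [w0 [Hw0 E]]]]. apply (P1_strip q hq A hA y w0 hy Hw0 (eq_sym E)). }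
  assert (H23 : P2 -> P3).
  { intros [s [hs Hi]]. apply (P2_strip q hq A hA s hs Hi). }
  assert (H31 : P3 -> P1).
  { intros [t [ht Hs]]. apply (P3_P1 q hq A hA t ht Hs). }
  split; [split; split; tauto|].
  intros a ha [y [hya [w0 [Hw0 E]]]].
  assert (hy : y <> 0) by (intro h; subst y; rewrite Rabs_R0 in hya; lra).
  rewrite <- hya, pow2_abs. split; [apply Rmult_lt_0_compat; auto|]. split.
  - apply (P1_inv q A hA y w0 hy Hw0 (eq_sym E)).
  - intros s hs Hi. apply (P1_min q hq A hA y w0 hy Hw0 (eq_sym E) s hs Hi).
Qed.
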